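(* Consider an execution of \textsf{Contagion} (described in the context) in which the sender $\sigma$ is correct and broadcasts $m$. If in this execution the underlying $pcb$ satisfies total validity (every correct process eventually $pcb$-delivers $m$) and $\sigma$ has no more than $D-\hat D$ Byzantine entries in its delivery sample, then \textsf{Contagion} satisfies validity in this execution, i.e., $\sigma$ eventually delivers $m$.
   Context: System model: a fixed set $\Pi$ of processes, some Byzantine and the rest correct, asynchronous reliable authenticated links (messages between correct processes are eventually delivered); signatures cannot be forged. $pcb$ is a probabilistic consistent broadcast instance with sender $\sigma$. \textsf{Contagion} (parameters $R,\hat R,D,\hat D$): each correct process draws a ready sample of $R$ and a delivery sample of $D$ entries, each uniformly from $\Pi$ with replacement, and sends ReadySubscribe to each, recording its own subscribers. To broadcast $m$, $\sigma$ $pcb$-broadcasts $(m,\mathrm{sign}_\sigma(m))$. Upon $pcb$-delivering a correctly signed pair, a correct process becomes ready for it and sends Ready for it to all current and future subscribers. Only correctly signed Ready messages are accepted, recorded separately for senders in the ready sample and in the delivery sample. When at least $\hat R$ members of its ready sample have sent Ready for a pair, a correct process becomes ready for it and sends Ready for it to its subscribers. A correct process delivers (at most once) the message of the first pair for which at least $\hat D$ members of its delivery sample have sent Ready. *)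

(* Defs.v *)
From HB Require Import structures.
From mathcomp Require Import all_boot.
Set Implicit Arguments. Unset Strict Implicit. Unset Printing Implicit Defensive.

Section Contagion.
Variables (Proc : finType) (Msg : eqType).

(* Symbolic signatures: sign_p(m) is the pair (p, m). *)
Definition Sig := (Proc * Msg)%type.
Definition sign (p : Proc) (x : Msg) : Sig := (p, x).
(* A (message, signature) pair as pcb-broadcast by the sender. *)
Definition Pair := (Msg * Sig)%type.

Inductive NetMsg := ReadySubscribe | Ready of Pair.

Definition NetMsg_enc (x : NetMsg) : option Pair :=
  if x is Ready pr then Some pr else None.
Definition NetMsg_dec (o : option Pair) : NetMsg :=
  if o is Some pr then Ready pr else ReadySubscribe.
Lemma NetMsg_encK : cancel NetMsg_enc NetMsg_dec. Proof. by case. Qed.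
HB.instance Definition _ := Equality.copy NetMsg (can_type NetMsg_encK).

Variables (correct : pred Proc) (sigma : Proc) (m : Msg)
          (R Rh D Dh : nat).

Definition valid (pr : Pair) : bool := pr.2 == sign sigma pr.1.

Record execution := Execution {
  (* ready sample and delivery sample of each process (entries, with replacement) *)
  rs : Proc -> R.-tuple Proc;
  ds : Proc -> D.-tuple Proc;
  (* send p t : messages (with destinations) sent by p at step t *)
  send : Proc -> nat -> seq (Proc * NetMsg);
  (* recv q t : the (at most one) message received by q at step t, with its
     authenticated sender *)
  recv : Proc -> nat -> option (Proc * NetMsg);
  (* pcbd p t : pair pcb-delivered by p at step t (if any) *)
  pcbd : Proc -> nat -> option Pair
}.

Variable e : execution.

Definition received_before (q p : Proc) (x : NetMsg) (t : nat) : bool :=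
  has (fun t' => recv e q t' == Some (p, x)) (iota 0 t).

Definition subscriber (p q : Proc) (t : nat) : bool :=
  received_before p q ReadySubscribe t.

(* number of entries of p's ready / delivery sample from which p has
   received Ready for pr before step t (entries counted with multiplicity) *)
Definition rcount (p : Proc) (pr : Pair) (t : nat) : nat :=
  count (fun q => received_before p q (Ready pr) t) (rs e p).
Definition dcount (p : Proc) (pr : Pair) (t : nat) : nat :=
  count (fun q => received_before p q (Ready pr) t) (ds e p).

Definition ready (p : Proc) (pr : Pair) (t : nat) : bool :=
  valid pr &&
  (has (fun t' => pcbd e p t' == Some pr) (iota 0 t.+1) || (Rh <= rcount p pr t)).

Definition reached (p : Proc) (pr : Pair) (t : nat) : bool :=
  valid pr && (Dh <= dcount p pr t).

Definition delivers (p : Proc) (m' : Msg) : Prop :=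
  exists t pr, [/\ reached p pr t,
                   (forall t' pr', t' < t -> ~~ reached p pr' t') & pr.1 = m'].

Definition is_execution : Prop :=
  (forall p q, correct p -> (q \in rs e p) || (q \in ds e p) ->
     exists t, (q, ReadySubscribe) \in send e p t) /\
  (forall p q pr t1 t2, correct p -> ready p pr t1 -> subscriber p q t2 ->
     exists t, (q, Ready pr) \in send e p t) /\
  (* reliable links between correct processes *)
  (forall p q x t, correct p -> correct q -> (q, x) \in send e p t ->
     exists t', t <= t' /\ recv e q t' = Some (p, x)) /\
  (* authenticated links: no message is attributed to a correct sender
     that it did not send *)
  (forall p q x t, correct p -> correct q -> recv e q t = Some (p, x) ->
     exists t', t' <= t /\ (q, x) \in send e p t') /\
  (* unforgeable signatures: the correct sender sigma signs only m, so every
     correctly signed pair observed by a correct process carries m *)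
  (forall q t pr, correct q -> valid pr ->
     pcbd e q t = Some pr \/ (exists p, recv e q t = Some (p, Ready pr)) ->
     pr.1 = m).

Definition pcb_total_validity : Prop :=
  forall p, correct p -> exists t, pcbd e p t = Some (m, sign sigma m).

End Contagion.

(* Main.v *)
Require Import Defs.
From mathcomp Require Import all_boot.
From mathcomp Require Import zify.

Lemma count_in_le (T : eqType) (a b : pred T) (s : seq T) :
  (forall q, q \in s -> a q -> b q) -> count a s <= count b s.
Proof.
elim: s => //= x s IH H.
apply: leq_add; last by apply: IH => q qs; apply: H; rewrite inE qs orbT.
case ax: (a x) => //=; by rewrite H ?inE ?eqxx.
Qed.

Lemma ex_common_T (T : eqType) (a : pred T) (P : T -> nat -> bool) (s : seq T) :
  (forall q t t', t <= t' -> P q t -> P q t') ->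
  (forall q, q \in s -> a q -> exists t, P q t) ->
  exists T0, forall q, q \in s -> a q -> P q T0.
Proof.
move=> mono; elim: s => [|x s IH] H; first by exists 0.
have [T1 HT1] : exists T0, forall q, q \in s -> a q -> P q T0.
  by apply: IH => q qs; apply: H; rewrite inE qs orbT.
case ax: (a x).
  have [t Ht] := H x (mem_head _ _) ax.
  exists (maxn t T1) => q; rewrite inE => /orP [/eqP -> _|qs aq].
    by apply: mono Ht; rewrite leq_maxl.
  by apply: mono (HT1 q qs aq); rewrite leq_maxr.
exists T1 => q; rewrite inE => /orP [/eqP ->|]; first by rewrite ax.
exact: HT1.
Qed.

Lemma rbP (Proc : finType) (Msg : eqType) R D (e : execution Proc Msg R D) q p x t :
  reflect (exists2 t', t' < t & recv e q t' = Some (p, x))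
          (received_before e q p x t).
Proof.
apply: (iffP hasP) => [[t' ] | [t' ]].
  by rewrite mem_iota add0n => /andP[_ lt] /eqP E; exists t'.
by move=> lt E; exists t'; rewrite ?mem_iota ?add0n ?lt ?E ?eqxx.
Qed.

Lemma rb_mono (Proc : finType) (Msg : eqType) R D (e : execution Proc Msg R D) q p x t t' :
  t <= t' -> received_before e q p x t -> received_before e q p x t'.
Proof.
move=> le /rbP [u lt E]; apply/rbP; exists u => //; exact: leq_trans lt le.
Qed.

Theorem lemma20 (Proc : finType) (Msg : eqType) (correct : pred Proc)
  (sigma : Proc) (m : Msg) (R Rh D Dh : nat)
  (e : execution Proc Msg R D) :
  0 < Dh <= D ->
  correct sigma ->
  is_execution correct sigma m Rh e ->
  pcb_total_validity correct sigma m e ->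
  count (fun p => ~~ correct p) (ds e sigma) <= D - Dh ->
  delivers sigma Dh e sigma m.
Proof.
move=> /andP[Dh0 DhD] cs [Hsub [Hready [Hrel [Hauth Hsig]]]] Htv Hbyz.
set pr0 : Pair Proc Msg := (m, sign sigma m).
have vpr0 : valid sigma pr0 by rewrite /valid eqxx.
have Honly : forall t pr, reached sigma Dh e sigma pr t -> pr = pr0.
  move=> t pr /andP[vpr dc].
  have : 0 < dcount e sigma pr t by exact: leq_trans Dh0 dc.
  rewrite /dcount -has_count => /hasP [q _ /rbP [t' _ Er]].
  have := Hsig sigma t' pr cs vpr (or_intror (ex_intro _ q Er)).
  move=> Hm; clear dc Er; move: vpr Hm; rewrite /valid /sign.
  by case: pr => m' s /= /eqP -> ->.
have Hq : forall q, q \in ds e sigma -> correct q ->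
    exists t, received_before e sigma q (Ready pr0) t.
  move=> q qin cq.
  have [t1 S1] := Hsub sigma q cs (introT orP (or_intror qin)).
  have [t2 [_ R2]] := Hrel sigma q _ _ cs cq S1.
  have [t3 P3] := Htv q cq.
  have rdy : ready sigma Rh e q pr0 t3.
    rewrite /ready vpr0; apply/orP; left; apply/hasP; exists t3.
      by rewrite mem_iota add0n ltnSn.
    by rewrite P3.
  have sb : subscriber e q sigma t2.+1 by apply/rbP; exists t2.
  have [t4 S4] := Hready q sigma pr0 t3 t2.+1 cq rdy sb.
  have [t5 [_ R5]] := Hrel q sigma _ _ cq cs S4.
  by exists t5.+1; apply/rbP; exists t5.
have [T HT] := @ex_common_T _ _ (fun q t => received_before e sigma q (Ready pr0) t) _ (fun q t t' le => @rb_mono _ _ _ _ e sigma q _ t t' le) Hq.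
have Hreach : exists t, reached sigma Dh e sigma pr0 t.
  exists T; rewrite /reached vpr0 /=.
  have Hc : Dh <= count correct (ds e sigma).
    have := count_predC correct (ds e sigma); rewrite size_tuple => Hs.
    have : count (predC correct) (ds e sigma) <= D - Dh by [].
    move: Hs; set a := count correct _; set b := count (predC _) _ => Hs Hb.
    lia.
  apply: leq_trans Hc _; rewrite /dcount; apply: count_in_le => q qin cq.
  exact: HT.
pose P t := reached sigma Dh e sigma pr0 t.
have Pex : exists t, P t by [].
exists (ex_minn Pex), pr0; split => //.
  by case: ex_minnP.
move=> t' pr' lt; apply/negP => Hr.
have E := Honly _ _ Hr; subst pr'.
case: ex_minnP lt => n _ Hmin lt.
by have := Hmin t' Hr; rewrite leqNgt lt.
Qed.
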